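(* Define $\alpha,\beta:[0,2\pi]\to\mathbb{R}^3$ and $\gamma:[0,\pi]\to\mathbb{R}^3$ by $\alpha(t)=(\cos t,\sin t,1)$, $\beta(t)=(\cos t,\sin t,-1)$, $\gamma(t)=\big(2\cos(2t)-1,\ 2\sin(2t),\ \tfrac98\cos t-\tfrac18\cos(3t)\big)$, and let $C=\operatorname{conv}\big(\alpha([0,2\pi])\cup\beta([0,2\pi])\cup\gamma([0,\pi])\big)\subseteq\mathbb{R}^3$. Then the cone $\mathcal{K}=\operatorname{cone}(C\times\{1\})\subseteq\mathbb{R}^4$ is not amenable.
   Context: $\operatorname{cone}S=\{\lambda x:x\in S,\lambda\ge0\}$. A face of a closed convex cone $\mathcal{K}$ is a closed convex subset $\mathcal{F}\subseteq\mathcal{K}$ such that whenever $x,y\in\mathcal{K}$ and $\alpha x+(1-\alpha)y\in\mathcal{F}$ for some $\alpha\in(0,1)$, then $x,y\in\mathcal{F}$. $\mathcal{K}$ is amenable if for every face $\mathcal{F}$ there exists $\kappa>0$ with $\operatorname{dist}(x,\mathcal{F})\le\kappa\operatorname{dist}(x,\mathcal{K})$ for all $x\in\operatorname{span}\mathcal{F}$. *)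

(* Defs.v *)
From HB Require Import structures.
From mathcomp Require Import all_boot all_order all_algebra.
From mathcomp Require Import all_classical all_reals all_analysis.
Set Implicit Arguments. Unset Strict Implicit. Unset Printing Implicit Defensive.
Import Order.TTheory GRing.Theory Num.Theory numFieldNormedType.Exports.
Local Open Scope classical_set_scope.
Local Open Scope ring_scope.

Section Defs.
Variable R : realType.

Definition enorm (n : nat) (x : 'rV[R]_n) : R :=
  Num.sqrt (\sum_(i < n) (x ord0 i) ^+ 2).
Definition edist (n : nat) (x : 'rV[R]_n) (A : set 'rV[R]_n) : R :=
  inf [set enorm (x - y) | y in A].

Definition conv (n : nat) (S : set 'rV[R]_n) : set 'rV[R]_n :=
  [set x | exists m (p : 'I_m -> 'rV[R]_n) (w : 'I_m -> R),
     (forall i, S (p i)) /\ (forall i, 0 <= w i) /\ \sum_(i < m) w i = 1 /\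
     x = \sum_(i < m) w i *: p i].

(* linear span: all finite linear combinations (span of the empty set is {0}) *)
Definition span (n : nat) (S : set 'rV[R]_n) : set 'rV[R]_n :=
  [set x | exists m (p : 'I_m -> 'rV[R]_n) (c : 'I_m -> R),
     (forall i, S (p i)) /\ x = \sum_(i < m) c i *: p i].

Definition cone (n : nat) (S : set 'rV[R]_n) : set 'rV[R]_n :=
  [set y | exists l x, 0 <= l /\ S x /\ y = l *: x].

Definition convex_set_of (n : nat) (S : set 'rV[R]_n) : Prop :=
  forall x y (a : R), S x -> S y -> 0 <= a <= 1 -> S (a *: x + (1 - a) *: y).

Definition is_face (n : nat) (K F : set 'rV[R]_n) : Prop :=
  F !=set0 /\ F `<=` K /\ closed F /\ convex_set_of F /\
  (forall x y (a : R), K x -> K y -> 0 < a < 1 ->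
     F (a *: x + (1 - a) *: y) -> F x /\ F y).

Definition amenable (n : nat) (K : set 'rV[R]_n) : Prop :=
  forall F, is_face K F -> exists kappa : R, 0 < kappa /\
    forall x, span F x -> edist x F <= kappa * edist x K.

Definition vec3 (a b c : R) : 'rV[R]_3 :=
  \row_(i < 3) (if (i : nat) == 0%N then a else if (i : nat) == 1%N then b else c).

Definition lift1 (C : set 'rV[R]_3) : set 'rV[R]_4 :=
  [set row_mx c (const_mx 1 : 'rV[R]_1) | c in C].

Definition alpha (t : R) : 'rV[R]_3 := vec3 (cos t) (sin t) 1.
Definition beta (t : R) : 'rV[R]_3 := vec3 (cos t) (sin t) (-1).
Definition gamma (t : R) : 'rV[R]_3 :=
  vec3 (2 * cos (2 * t) - 1) (2 * sin (2 * t))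
       (9 / 8 * cos t - 1 / 8 * cos (3 * t)).

Definition C_set : set 'rV[R]_3 :=
  conv (alpha @` `[0, 2 * pi] `|` beta @` `[0, 2 * pi] `|` gamma @` `[0, pi]).

Definition K_cone : set 'rV[R]_4 := cone (lift1 C_set).
End Defs.

(* Main.v *)
Set Warnings "-all".
Require Import Defs.
From HB Require Import structures.
From mathcomp Require Import all_boot all_order all_algebra.
From mathcomp Require Import all_classical all_reals all_analysis.
From mathcomp Require Import ring lra.
Set Implicit Arguments. Unset Strict Implicit. Unset Printing Implicit Defensive.
Import Order.TTheory GRing.Theory Num.Theory numFieldNormedType.Exports.
Local Open Scope classical_set_scope.
Local Open Scope ring_scope.

Section S.
Variable R : realType.
Definition j0 : 'I_4 := @Ordinal 4 0 isT.
Definition j1 : 'I_4 := @Ordinal 4 1 isT.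
Definition j2 : 'I_4 := @Ordinal 4 2 isT.
Definition j3 : 'I_4 := @Ordinal 4 3 isT.
Definition k0 : 'I_3 := @Ordinal 3 0 isT.
Definition k1 : 'I_3 := @Ordinal 3 1 isT.
Definition k2 : 'I_3 := @Ordinal 3 2 isT.

Lemma sum4 (f : 'I_4 -> R) : \sum_i f i = f j0 + f j1 + f j2 + f j3.
Proof.
rewrite !big_ord_recr big_ord0 /= add0r.
by congr (_ + _ + _ + _); congr f; apply: val_inj.
Qed.

Lemma sum3 (f : 'I_3 -> R) : \sum_i f i = f k0 + f k1 + f k2.
Proof.
rewrite !big_ord_recr big_ord0 /= add0r.
by congr (_ + _ + _); congr f; apply: val_inj.
Qed.

Lemma rm0 (c : 'rV[R]_3) (d : 'rV[R]_1) : row_mx c d ord0 j0 = c ord0 k0.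
Proof. by rewrite (_ : j0 = lshift 1 k0) ?row_mxEl //; apply: val_inj. Qed.
Lemma rm1 (c : 'rV[R]_3) (d : 'rV[R]_1) : row_mx c d ord0 j1 = c ord0 k1.
Proof. by rewrite (_ : j1 = lshift 1 k1) ?row_mxEl //; apply: val_inj. Qed.
Lemma rm2 (c : 'rV[R]_3) (d : 'rV[R]_1) : row_mx c d ord0 j2 = c ord0 k2.
Proof. by rewrite (_ : j2 = lshift 1 k2) ?row_mxEl //; apply: val_inj. Qed.
Lemma rm3 (c : 'rV[R]_3) (d : 'rV[R]_1) : row_mx c d ord0 j3 = d ord0 ord0.
Proof. by rewrite (_ : j3 = rshift 3 ord0) ?row_mxEr //; apply: val_inj. Qed.

Lemma v0 (a b c : R) : vec3 a b c ord0 k0 = a. Proof. by rewrite mxE. Qed.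
Lemma v1 (a b c : R) : vec3 a b c ord0 k1 = b. Proof. by rewrite mxE. Qed.
Lemma v2 (a b c : R) : vec3 a b c ord0 k2 = c. Proof. by rewrite mxE. Qed.

Lemma trig2 (t : R) : cos (2 * t) = 2 * cos t ^+ 2 - 1 /\ sin (2 * t) = 2 * sin t * cos t.
Proof.
have e : 2 * t = t + t by ring.
have h := cos2Dsin2 t.
rewrite e cosD sinD; split; [lra|ring].
Qed.

Lemma trig3 (t : R) : cos (3 * t) = 4 * cos t ^+ 3 - 3 * cos t.
Proof.
have e : 3 * t = 2 * t + t by ring.
have h := cos2Dsin2 t. have [h1 h2] := trig2 t.
rewrite e cosD h1 h2.
have -> : 2 * sin t * cos t * sin t = 2 * cos t * sin t ^+ 2 by ring.
have -> : sin t ^+ 2 = 1 - cos t ^+ 2 by lra.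
ring.
Qed.

Lemma sq_le (x y : R) : 0 <= y -> x ^+ 2 <= y ^+ 2 -> x <= y.
Proof. move=> hy h; nra. Qed.

Definition Gen : set 'rV[R]_3 :=
  (@alpha R) @` `[0, 2 * pi] `|` (@beta R) @` `[0, 2 * pi] `|` (@gamma R) @` `[0, pi].

Lemma gen_prop g : Gen g ->
  g ord0 k2 <= 1 /\ (g ord0 k2 = 1 -> g ord0 k0 ^+ 2 + g ord0 k1 ^+ 2 <= 1).
Proof.
case=> [[|]|] [t _ <-].
- rewrite /alpha v0 v1 v2; split => // _; by rewrite cos2Dsin2.
- rewrite /beta v2; split; first lra. move=> h; lra.
- rewrite /gamma v0 v1 v2 trig3; have [h1 h2] := trig2 t.
  rewrite h1 h2; move: (cos2Dsin2 t); generalize (cos t) (sin t) => c s h.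
  have hs2 := sqr_ge0 s.
  have hc2 : c ^+ 2 <= 1 by lra.
  have hc : -1 <= c <= 1 by apply/andP; split; nra.
  have e1 : 1 - (9 / 8 * c - 1 / 8 * (4 * c ^+ 3 - 3 * c)) = (1 - c) ^+ 2 * (2 + c) / 2 by field.
  split.
  + suff : 0 <= (1 - c) ^+ 2 * (2 + c) / 2 by lra.
    apply: divr_ge0 => //; apply: mulr_ge0; [exact: sqr_ge0 | lra].
  + move=> hz.
    have h0 : (1 - c) ^+ 2 * (2 + c) = 0 by lra.
    move/eqP: h0; rewrite mulf_eq0 sqrf_eq0 => /orP [/eqP hc1|/eqP hc1]; last lra.
    have c1 : c = 1 by lra.
    have s0 : s ^+ 2 = 0 by rewrite c1 in h; lra.
    have s00 : s = 0 by move/eqP: s0; rewrite sqrf_eq0 => /eqP.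
    rewrite c1 s00; lra.
Qed.

Lemma coord_sum m (w : 'I_m -> R) (p : 'I_m -> 'rV[R]_3) k :
  (\sum_i w i *: p i) ord0 k = \sum_i w i * p i ord0 k.
Proof. rewrite summxE; apply: eq_bigr => i _; by rewrite mxE. Qed.

Lemma C_prop c : @C_set R c ->
  c ord0 k2 <= 1 /\ (c ord0 k2 = 1 -> c ord0 k0 ^+ 2 + c ord0 k1 ^+ 2 <= 1).
Proof.
move=> [m [p [w [hp [hw [hs ->]]]]]].
rewrite !coord_sum.
have hz : \sum_i w i * p i ord0 k2 <= 1.
  rewrite -hs; apply: ler_sum => i _.
  have [h _] := gen_prop (hp i); have := hw i; nra.
split => // hz1.
have h0 : \sum_i w i * (1 - p i ord0 k2) = 0.
  under eq_bigr do rewrite mulrBr mulr1.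
  by rewrite sumrB hs hz1 subrr.
have hi : forall i, w i * (1 - p i ord0 k2) = 0.
  move=> i; apply: (psumr_eq0P _ h0) => // j _.
  have [h _] := gen_prop (hp j); have := hw j; nra.
set c0 := \sum_i w i * p i ord0 k0.
set c1 := \sum_i w i * p i ord0 k1.
set N := Num.sqrt (c0 ^+ 2 + c1 ^+ 2).
have hN : N ^+ 2 = c0 ^+ 2 + c1 ^+ 2 by rewrite sqr_sqrtr // addr_ge0 // sqr_ge0.
have hN0 : 0 <= N by apply: sqrtr_ge0.
have e : c0 ^+ 2 + c1 ^+ 2 = \sum_i w i * (c0 * p i ord0 k0 + c1 * p i ord0 k1).
  rewrite expr2 [X in _ + X]expr2 {2}/c0 {2}/c1 !mulr_sumr -big_split /=.
  by apply: eq_bigr => i _; ring.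
have : c0 ^+ 2 + c1 ^+ 2 <= N.
  rewrite e -[N]mul1r -hs mulr_suml; apply: ler_sum => i _.
  have := hi i; have := hw i => hwi.
  have [->|wne] := eqVneq (w i) 0; first by rewrite !mul0r.
  move=> hh.
  have p2 : p i ord0 k2 = 1.
    move/eqP: hh; rewrite mulf_eq0 (negbTE wne) /= subr_eq0 => /eqP; by [].
  have [_ hd] := gen_prop (hp i); have {}hd := hd p2.
  apply: ler_wpM2l => //; apply: sq_le => //.
  rewrite hN.
  set a := p i ord0 k0 in hd *; set b := p i ord0 k1 in hd *.
  have cs : (c0 * a + c1 * b) ^+ 2 <= (c0 ^+ 2 + c1 ^+ 2) * (a ^+ 2 + b ^+ 2) by
    have := sqr_ge0 (c0 * b - c1 * a); nra.
  have : 0 <= c0 ^+ 2 + c1 ^+ 2 by rewrite addr_ge0 // sqr_ge0.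
  nra.
rewrite -hN => hle; nra.
Qed.

Lemma ord4_cases (j : 'I_4) : j = j0 \/ j = j1 \/ j = j2 \/ j = j3.
Proof.
case: j => [[|[|[|[|//]]]] hj];
  [left|right;left|right;right;left|right;right;right]; exact: val_inj.
Qed.

Lemma ord3_cases (j : 'I_3) : j = k0 \/ j = k1 \/ j = k2.
Proof.
case: j => [[|[|[|//]]] hj]; [left|right;left|right;right]; exact: val_inj.
Qed.

Local Notation lft c := (row_mx c (const_mx 1 : 'rV[R]_1)).
Lemma scl (l : R) (M : 'rV[R]_4) j : (l *: M) ord0 j = l * M ord0 j. Proof. by rewrite mxE. Qed.

Lemma lft0 (c : 'rV[R]_3) : lft c ord0 j0 = c ord0 k0. Proof. by rewrite rm0. Qed.
Lemma lft1 (c : 'rV[R]_3) : lft c ord0 j1 = c ord0 k1. Proof. by rewrite rm1. Qed.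
Lemma lft2 (c : 'rV[R]_3) : lft c ord0 j2 = c ord0 k2. Proof. by rewrite rm2. Qed.
Lemma lft3 (c : 'rV[R]_3) : lft c ord0 j3 = 1. Proof. by rewrite rm3 mxE. Qed.

Lemma K_prop z : @K_cone R z ->
  z ord0 j2 <= z ord0 j3 /\ 0 <= z ord0 j3 /\
  (z ord0 j2 = z ord0 j3 -> z ord0 j0 ^+ 2 + z ord0 j1 ^+ 2 <= z ord0 j3 ^+ 2).
Proof.
move=> [l [x [hl [[c hc <-] ->]]]].
rewrite !scl lft0 lft1 lft2 lft3 mulr1.
have [h1 h2] := C_prop hc.
split; first nra. split => // e.
have [->|lne] := eqVneq l 0; first by rewrite !mul0r expr0n /= addr0.
have c2 : c ord0 k2 = 1.
  apply: (mulfI lne); by rewrite mulr1.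
have := h2 c2; rewrite !exprMn -mulrDr => h.
by rewrite -[X in _ <= X]mulr1; apply: ler_wpM2l => //; apply: sqr_ge0.
Qed.

Definition Fset : set 'rV[R]_4 := [set y | y ord0 j2 = y ord0 j3 /\
  y ord0 j0 ^+ 2 + y ord0 j1 ^+ 2 <= y ord0 j3 ^+ 2 /\ 0 <= y ord0 j3].

Lemma F_closed : closed Fset.
Proof.
have -> : Fset = ((fun y : 'rV[R]_4 => y ord0 j2 - y ord0 j3) @^-1` [set x | x = 0]) `&`
   ((fun y : 'rV[R]_4 => y ord0 j3 * y ord0 j3 - y ord0 j0 * y ord0 j0 - y ord0 j1 * y ord0 j1) @^-1` [set x | 0 <= x]) `&`
   ((fun y : 'rV[R]_4 => y ord0 j3) @^-1` [set x | 0 <= x]).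
  apply/seteqP; split => y /=; rewrite /Fset /= !expr2.
    move=> [h1 [h2 h3]]; split; [split|] => //; lra.
  move=> [[h1 h2] h3]; split; [lra|split => //; lra].
apply: closedI; [apply: closedI|].
- apply: preimage_closed; last exact: closed_eq.
  move=> y _; exact: (@continuousB _ _ _ (fun y : 'rV[R]_4 => y ord0 j2) (fun y => y ord0 j3) y (@coord_continuous R _ _ _ _ y) (@coord_continuous R _ _ _ _ y)).
- apply: preimage_closed; last exact: closed_ge.
  move=> y _.
  have cM : forall j, {for y, continuous (fun y : 'rV[R]_4 => y ord0 j * y ord0 j)}.
    move=> j; exact: (@continuousM _ _ (fun y : 'rV[R]_4 => y ord0 j) (fun y => y ord0 j) y (@coord_continuous R _ _ _ _ y) (@coord_continuous R _ _ _ _ y)).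
  exact: (@continuousB _ _ _ (fun y : 'rV[R]_4 => y ord0 j3 * y ord0 j3 - y ord0 j0 * y ord0 j0) (fun y => y ord0 j1 * y ord0 j1) y
     (@continuousB _ _ _ (fun y : 'rV[R]_4 => y ord0 j3 * y ord0 j3) (fun y => y ord0 j0 * y ord0 j0) y (cM j3) (cM j0)) (cM j1)).
- apply: preimage_closed; last exact: closed_ge.
  move=> y _; exact: coord_continuous.
Qed.


Lemma cs2 (p1 q1 p2 q2 : R) : (p1 * p2 + q1 * q2) ^+ 2 <= (p1 ^+ 2 + q1 ^+ 2) * (p2 ^+ 2 + q2 ^+ 2).
Proof. have := sqr_ge0 (p1 * q2 - q1 * p2); nra. Qed.

Lemma F_convex : convex_set_of Fset.
Proof.
move=> x y a [hx1 [hx2 hx3]] [hy1 [hy2 hy3]] /andP [ha0 ha1].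
have add : forall j, (a *: x + (1 - a) *: y) ord0 j = a * x ord0 j + (1 - a) * y ord0 j.
  by move=> j; rewrite !mxE.
rewrite /Fset /= !add hx1 hy1; split => //.
set p1 := x ord0 j0 in hx2 *; set q1 := x ord0 j1 in hx2 *; set s1 := x ord0 j3 in hx2 hx3 *.
set p2 := y ord0 j0 in hy2 *; set q2 := y ord0 j1 in hy2 *; set s2 := y ord0 j3 in hy2 hy3 *.
set b := 1 - a. have hb : 0 <= b by rewrite /b; lra.
split; last by apply: addr_ge0; apply: mulr_ge0.
have hd : p1 * p2 + q1 * q2 <= s1 * s2.
  apply: sq_le; first exact: mulr_ge0.
  apply: le_trans (cs2 p1 q1 p2 q2) _.
  rewrite exprMn; apply: ler_pM => //; apply: addr_ge0; exact: sqr_ge0.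
have e : (a * p1 + b * p2) ^+ 2 + (a * q1 + b * q2) ^+ 2 =
  a ^+ 2 * (p1 ^+ 2 + q1 ^+ 2) + 2 * (a * b) * (p1 * p2 + q1 * q2) + b ^+ 2 * (p2 ^+ 2 + q2 ^+ 2) by ring.
have e2 : (a * s1 + b * s2) ^+ 2 = a ^+ 2 * s1 ^+ 2 + 2 * (a * b) * (s1 * s2) + b ^+ 2 * s2 ^+ 2 by ring.
rewrite e e2.
have hab : 0 <= 2 * (a * b) by apply: mulr_ge0 => //; apply: mulr_ge0.
apply: lerD; [apply: lerD|]; apply: ler_wpM2l => //; exact: sqr_ge0.
Qed.

Lemma F_extreme x y (a : R) : @K_cone R x -> @K_cone R y -> 0 < a < 1 ->
  Fset (a *: x + (1 - a) *: y) -> Fset x /\ Fset y.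
Proof.
move=> /K_prop [hx1 [hx2 hx3]] /K_prop [hy1 [hy2 hy3]] /andP [ha0 ha1].
have add : forall j, (a *: x + (1 - a) *: y) ord0 j = a * x ord0 j + (1 - a) * y ord0 j.
  by move=> j; rewrite !mxE.
rewrite /Fset /= !add => [[h _]].
have ex : x ord0 j2 = x ord0 j3 by nra.
have ey : y ord0 j2 = y ord0 j3 by nra.
split; split => //; split => //; [exact: hx3 | exact: hy3].
Qed.

Lemma disk u v : u ^+ 2 + v ^+ 2 <= 1 -> @C_set R (vec3 u v 1).
Proof.
move=> huv.
have hu2 : u ^+ 2 <= 1 by have := sqr_ge0 v; lra.
have hu : -1 <= u <= 1 by apply/andP; split; nra.
set th := acos u.
have [/andP [th0 thpi] cth] := acos_def hu.
have sth := sin_acos hu.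
set w := Num.sqrt (1 - u ^+ 2) in sth.
have hw2 : w ^+ 2 = 1 - u ^+ 2 by rewrite sqr_sqrtr // subr_ge0.
have hw0 : 0 <= w by apply: sqrtr_ge0.
have hvw : v ^+ 2 <= w ^+ 2 by lra.
have pi0 := pi_gt0 R.
have e2pi : 2 * pi = pi *+ 2 :> R by rewrite mulr_natl.
set P1 := alpha th. set P2 := alpha (2 * pi - th).
have eP1 : P1 = vec3 u w 1 by rewrite /P1 /alpha cth sth.
have eP2 : P2 = vec3 u (- w) 1.
  by rewrite /P2 /alpha cosB sinB e2pi cos2pi sin2pi cth sth; congr vec3; ring.
set lam := (1 + v / w) / 2.
have hvw' : v / w * w = v.
  have [w0|wn0] := eqVneq w 0; last by rewrite divfK.
  rewrite w0 mulr0; move: hvw; rewrite w0 expr0n /= => h.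
  have : v ^+ 2 = 0 by have := sqr_ge0 v; lra.
  by move/eqP; rewrite sqrf_eq0 => /eqP.
have hlam : 0 <= v / w + 1 /\ 0 <= 1 - v / w.
  have [w0|wn0] := eqVneq w 0; first by rewrite w0 invr0 mulr0; lra.
  have wp : 0 < w by rewrite lt_def wn0 hw0.
  have hv : `|v| <= w by rewrite -(ler_pXn2r (n:=2)) // ?normr_ge0 // real_normK // num_real.
  move: hv; rewrite ler_norml => /andP [hv1 hv2].
  split.
  + rewrite -(ler_pM2r wp) mulrDl hvw' mul0r; lra.
  + rewrite -(ler_pM2r wp) mulrBl hvw' mul0r; lra.
exists 2%N, (fun i : 'I_2 => if (i : nat) == 0%N then P1 else P2),
  (fun i : 'I_2 => if (i : nat) == 0%N then lam else 1 - lam).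
split.
  move=> i; case: ifP => _.
  - left; left; exists th => //=; rewrite in_itv /=; apply/andP; split => //; rewrite /th; lra.
  - left; left; exists (2 * pi - th) => //=; rewrite in_itv /=; apply/andP; split; rewrite /th; lra.
split.
  move=> i; case: ifP => _; rewrite /lam; lra.
rewrite !big_ord_recr !big_ord0 /= !add0r; split; first ring.
rewrite eP1 eP2; apply/rowP => k; rewrite !mxE.
case: k => [[|[|[|//]]] hk] /=; rewrite /lam; try ring.
rewrite -{1}hvw'; move: (v / w) => q.
by field.
Qed.


Lemma F_sub_K : Fset `<=` @K_cone R.
Proof.
move=> y [h2 [hd h3]].
set s := y ord0 j3 in h2 hd h3.
have hz : s = 0 -> y ord0 j0 = 0 /\ y ord0 j1 = 0.
  move=> s0; rewrite s0 expr0n /= in hd.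
  have a0 : y ord0 j0 ^+ 2 = 0 by have := sqr_ge0 (y ord0 j0); have := sqr_ge0 (y ord0 j1); lra.
  have a1 : y ord0 j1 ^+ 2 = 0 by have := sqr_ge0 (y ord0 j0); have := sqr_ge0 (y ord0 j1); lra.
  by move/eqP: a0; move/eqP: a1; rewrite !sqrf_eq0 => /eqP -> /eqP ->.
have dK : forall a, (s = 0 -> a = 0) -> s * (a / s) = a.
  move=> a ha; have [s0|sn0] := eqVneq s 0; first by rewrite s0 mul0r ha.
  by rewrite mulrC divfK.
exists s, (lft (vec3 (y ord0 j0 / s) (y ord0 j1 / s) 1)).
split => //; split.
  exists (vec3 (y ord0 j0 / s) (y ord0 j1 / s) 1) => //.
  apply: disk.
  have [s0|sn0] := eqVneq s 0.
    by rewrite s0 invr0 !mulr0 expr0n /= addr0 ler01.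
  rewrite !expr_div_n -mulrDl ler_pdivrMr ?mul1r //.
  by rewrite lt_def sqrf_eq0 sn0 sqr_ge0.
apply/matrixP => i j; rewrite (ord1 i) scl.
case: (ord4_cases j) => [->|[->|[->|->]]];
  rewrite ?lft0 ?lft1 ?lft2 ?lft3 ?v0 ?v1 ?v2 ?mulr1 //.
- by symmetry; apply: dK => /hz [].
- by symmetry; apply: dK => /hz [].
Qed.

Lemma F_face : is_face (@K_cone R) Fset.
Proof.
split.
  exists 0; rewrite /Fset /= !mxE expr0n /= addr0; split => //; split => //.
split; first exact: F_sub_K.
split; first exact: F_closed.
split; first exact: F_convex.
exact: F_extreme.
Qed.

Lemma key (u1 u2 a b p q r s : R) : u1 ^+ 2 + u2 ^+ 2 = 1 ->
  u1 * a + u2 * b = 1 + 2 * s ^+ 2 -> p ^+ 2 + q ^+ 2 <= r ^+ 2 -> 0 <= r ->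
  s ^+ 4 <= (a - p) ^+ 2 + (b - q) ^+ 2 + (1 - r) ^+ 2 + (1 - r) ^+ 2.
Proof.
move=> hu hab hpq hr.
have L1 : u1 * p + u2 * q <= r.
  apply: sq_le => //; apply: le_trans (cs2 u1 u2 p q) _; by rewrite hu mul1r.
have L2 := cs2 u1 u2 (a - p) (b - q); rewrite hu mul1r in L2.
set L := u1 * (a - p) + u2 * (b - q) in L2.
have eL : L = u1 * a + u2 * b - (u1 * p + u2 * q) by rewrite /L; ring.
set w := 1 - r.
have h1 : 2 * s ^+ 2 <= L - w by rewrite eL hab /w; lra.
have h0 : 0 <= 2 * s ^+ 2 by apply: mulr_ge0 => //; apply: sqr_ge0.
have h2 : (2 * s ^+ 2) ^+ 2 <= (L - w) ^+ 2 by rewrite !(expr2 (_ - _)) [X in X <= _]expr2; apply: ler_pM.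
have h3 : (L - w) ^+ 2 <= 2 * (L ^+ 2 + w ^+ 2) by have := sqr_ge0 (L + w); lra.
have e4 : (2 * s ^+ 2) ^+ 2 = 4 * s ^+ 4 by ring.
have := sqr_ge0 (s ^+ 2); rewrite -exprM /= => h5.
have := sqr_ge0 w; have := sqr_ge0 (a - p); have := sqr_ge0 (b - q).
lra.
Qed.


Lemma enorm4 (z : 'rV[R]_4) : enorm z =
  Num.sqrt (z ord0 j0 ^+ 2 + z ord0 j1 ^+ 2 + z ord0 j2 ^+ 2 + z ord0 j3 ^+ 2).
Proof. by rewrite /enorm sum4. Qed.

Lemma subc (x y : 'rV[R]_4) j : (x - y) ord0 j = x ord0 j - y ord0 j.
Proof. by rewrite !mxE. Qed.
Lemma addc (x y : 'rV[R]_4) j : (x + y) ord0 j = x ord0 j + y ord0 j.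
Proof. by rewrite !mxE. Qed.

Lemma le_sqrt (a S : R) : 0 <= a -> a ^+ 2 <= S -> a <= Num.sqrt S.
Proof.
move=> ha h; rewrite -(ger0_norm ha) -sqrtr_sqr; exact: ler_wsqrtr.
Qed.

Lemma main_ineq : ~ amenable (@K_cone R).
Proof.
move=> H.
have [ka [hka Hka]] := H Fset F_face.
have hpos : 0 < 2 * ka + 2 by lra.
set d := (2 * ka + 2)^-1.
have hd2 : d * (2 * ka + 2) = 1 by rewrite /d mulVf // gt_eqF.
have hd0 : 0 < d by rewrite /d invr_gt0.
have hkd : ka * d = (1 - 2 * d) / 2.
  have : 2 * (ka * d) + 2 * d = 1 by nra.
  move=> h; lra.
have hdle : d <= 1 / 2.
  have : 0 <= ka * d by apply: mulr_ge0; lra.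
  rewrite hkd => h; lra.
set c := 1 - d.
have hc : -1 <= c <= 1 by apply/andP; split; rewrite /c; lra.
have [/andP [t0 tpi] ct] := acos_def hc.
move: (acos c) t0 tpi ct => t t0 tpi ct.
have hs := cos2Dsin2 t.
have [e2c e2s] := trig2 t. have e3 := trig3 t.
rewrite ct in hs e2c e3.
move: (sin t) hs e2s => s hs e2s.
have hs2 : s ^+ 2 = 1 - c ^+ 2 by lra.
set g := gamma t.
have g0 : g ord0 k0 = 2 * (2 * c ^+ 2 - 1) - 1 by rewrite /g /gamma v0 e2c.
have g1 : g ord0 k1 = 2 * (2 * s * c) by rewrite /g /gamma v1 e2s ct.
have g2 : g ord0 k2 = 9 / 8 * c - 1 / 8 * (4 * c ^+ 3 - 3 * c) by rewrite /g /gamma v2 e3 ct.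
have e1z : 1 - g ord0 k2 = d ^+ 2 * (3 - d) / 2 by rewrite g2 /c; field.
set x := lft (vec3 (g ord0 k0) (g ord0 k1) 1).
have Cg : @C_set R g.
  exists 1%N, (fun _ => g), (fun _ => 1); split.
    move=> _; right; exists t => //=; rewrite in_itv /=; apply/andP; split => //.
  split => //; split; first by rewrite big_ord1.
  by rewrite big_ord1 scale1r.
have Ky : @K_cone R (lft g).
  exists 1, (lft g); split => //; split; [by exists g | by rewrite scale1r].
have hspan : Defs.span Fset x.
  exists 3%N, (fun i : 'I_3 => if (i : nat) == 0%N then lft (vec3 1 0 1)
     else if (i : nat) == 1%N then lft (vec3 0 1 1) else lft (vec3 0 0 1)),
    (fun i : 'I_3 => if (i : nat) == 0%N then g ord0 k0
     else if (i : nat) == 1%N then g ord0 k1 else 1 - g ord0 k0 - g ord0 k1).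
  split.
    move=> i; case: ifP => _; [|case: ifP => _];
    rewrite /Fset /= lft0 lft1 lft2 lft3 v0 v1 v2 ?expr1n ?expr0n /= ?addr0 ?add0r; split => //; split => //; lra.
  rewrite !big_ord_recr big_ord0 /= add0r.
  apply/matrixP => i j; rewrite (ord1 i) !addc !scl.
  case: (ord4_cases j) => [->|[->|[->|->]]];
    rewrite /x ?lft0 ?lft1 ?lft2 ?lft3 ?v0 ?v1 ?v2; ring.
have hup : Defs.edist x (@K_cone R) <= 1 - g ord0 k2.
  rewrite /Defs.edist.
  have hlb : has_lbound [set enorm (x - y) | y in @K_cone R].
    by exists 0 => r [y _ <-]; apply: sqrtr_ge0.
  have hin : [set enorm (x - y) | y in @K_cone R] (enorm (x - lft g)) by exists (lft g).
  apply: le_trans (ge_inf hlb hin) _.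
  rewrite enorm4 !subc /x !lft0 !lft1 !lft2 !lft3 !v0 !v1 !v2 !subrr expr0n /= !add0r addr0.
  rewrite ct e3 -g2.
  rewrite sqrtr_sqr ger0_norm // e1z; apply: divr_ge0 => //; apply: mulr_ge0; [exact: sqr_ge0|lra].
have hlow : s ^+ 2 <= Defs.edist x Fset.
  apply: lb_le_inf.
    exists (enorm (x - 0)); exists 0 => //.
    rewrite /Fset /= !mxE expr0n /= addr0; split => //; split => //.
  move=> r [y [hy2 [hyd hy3]] <-].
  rewrite enorm4 !subc /x !lft0 !lft1 !lft2 !lft3 !v0 !v1 !v2 hy2.
  apply: le_sqrt; first exact: sqr_ge0.
  rewrite -exprM /=.
  apply: (@key (2 * c ^+ 2 - 1) (2 * s * c)) => //.
  - have -> : (2 * c ^+ 2 - 1) ^+ 2 + (2 * s * c) ^+ 2 = (2 * c ^+ 2 - 1) ^+ 2 + 4 * c ^+ 2 * s ^+ 2 by ring.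
    rewrite hs2; ring.
  - rewrite e2c e2s ct.
    have -> : (2 * c ^+ 2 - 1) * (2 * (2 * c ^+ 2 - 1) - 1) + 2 * s * c * (2 * (2 * s * c))
       = (2 * c ^+ 2 - 1) * (2 * (2 * c ^+ 2 - 1) - 1) + 8 * c ^+ 2 * s ^+ 2 by ring.
    rewrite hs2; ring.
have := Hka x hspan.
have h1 : ka * Defs.edist x (@K_cone R) <= ka * (1 - g ord0 k2) by apply: ler_wpM2l => //; lra.
have h2 : ka * (1 - g ord0 k2) < s ^+ 2.
  rewrite e1z hs2 /c.
  have -> : ka * (d ^+ 2 * (3 - d) / 2) = (ka * d) * d * (3 - d) / 2 by ring.
  rewrite hkd.
  have -> : (1 - 2 * d) / 2 * d * (3 - d) / 2 = d * ((1 - 2 * d) * (3 - d) / 4) by field.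
  have -> : 1 - (1 - d) ^+ 2 = d * (2 - d) by ring.
  rewrite ltr_pM2l //.
  nra.
lra.
Qed.
End S.

Theorem proposition5p2 (R : realType) : ~ amenable (@K_cone R).
Proof. exact: main_ineq. Qed.
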